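(* Let $d\in C_\Phi$. Then: (1) every $d'\in\mathbb{D}$ reachable from $d$ in the labelled transition system $(\mathbb{D},\mathbb{R}^c)$ lies in $C_\Phi$; (2) for every $\alpha\in\mathrm{Act}$, $U^d_\alpha={\uparrow}(L^d_\alpha\cap U^d_\alpha)$; (3) for every formula $\varphi$ of Hennessy–Milner logic, $(\mathbb{D},d)\models^c\varphi$ implies $(\mathbb{D},d)\models^a\varphi$.
   Context: Fix a finite set $\mathrm{Act}$ of events. For a dcpo $D$, $K(D)$ denotes its compact elements; a bifinite (SFP) domain is an algebraic dcpo in which for each finite $F\subseteq K(D)$ iterated minimal-upper-bound sets are finite and in $K(D)$ and every upper bound of $F$ is above a minimal upper bound. Scott topology: sets $U={\uparrow}(U\cap K(D))$; Lawson topology generated by ${\uparrow}k\setminus{\uparrow}l$, $k,l\in K(D)$. Mixed powerdomain $\mathcal{M}(D)$: pairs $(L,U)$, $L$ Scott-closed, $U$ Lawson-closed upper, $L={\downarrow}(L\cap U)$, ordered by $L\subseteq L'$ and $U'\subseteq U$. $\mathbb{D}$ is the initial solution over bifinite domains of $\mathbb{D}\cong\prod_{\alpha\in\mathrm{Act}}\mathcal{M}(\mathbb{D})$, $d=((L^d_\alpha,U^d_\alpha))_\alpha$, viewed as a mixed transition system $(\mathbb{D},\mathbb{R}^a,\mathbb{R}^c)$ with $(d,\alpha,d')\in\mathbb{R}^a$ iff $d'\in L^d_\alpha$ and $(d,\alpha,d')\in\mathbb{R}^c$ iff $d'\in U^d_\alpha$. Hennessy–Milner logic: $\varphi::=tt\mid\neg\varphi\mid\langle\alpha\rangle\varphi\mid\varphi\wedge\varphi$;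 $[\alpha]\varphi:=\neg\langle\alpha\rangle\neg\varphi$, $\varphi\vee\psi:=\neg(\neg\varphi\wedge\neg\psi)$; empty conjunction $tt$, empty disjunction $\neg tt$. For $m\in\{a,c\}$ ($\neg a=c$, $\neg c=a$): $(\mathbb{D},d)\models^m tt$; $\models^m\neg\varphi$ iff not $\models^{\neg m}\varphi$; $(\mathbb{D},d)\models^m\langle\alpha\rangle\varphi$ iff $(\mathbb{D},d')\models^m\varphi$ for some $(d,\alpha,d')\in\mathbb{R}^m$; $\wedge$ componentwise. $[\![\varphi]\!]^m=\{d : (\mathbb{D},d)\models^m\varphi\}$. Process terms $p::=\mathbf{0}\mid\bot\mid\alpha_{tt}.p\mid\alpha_\bot.p\mid p+p$ (no summand of $+$ equal to $\mathbf{0}$ or $\bot$). Transitions: $\bot\xrightarrow{\gamma}_\bot\bot$ for all $\gamma$; $\alpha_{tt}.p\xrightarrow{\alpha}_{tt}p$; $\alpha_\bot.p\xrightarrow{\alpha}_\bot p$; if $p\xrightarrow{\alpha}_v p'$ then $p+q\xrightarrow{\alpha}_v p'$ and $q+p\xrightarrow{\alpha}_v p'$. Formulas: $\varphi_{\mathbf{0}}=\bigwedge_\alpha\neg\langle\alpha\rangle tt$; $\varphi_\bot=tt$; $\varphi_{\alpha_{tt}.p}=\langle\alpha\rangle\varphi_p\wedge[\alpha]\varphi_p\wedge\bigwedge_{\beta\ne\alpha}\neg\langle\beta\rangle tt$; $\varphi_{\alpha_\bot.p}=[\alpha]\varphi_p\wedge\bigwedge_{\beta\ne\alpha}\neg\langle\beta\rangle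 tt$; $\varphi_{p+q}=\bigwedge\{\langle\alpha\rangle\varphi_{r'} : p+q\xrightarrow{\alpha}_{tt}r'\}\wedge\bigwedge_\alpha[\alpha]\bigvee\{\varphi_{r'} : p+q\xrightarrow{\alpha}_v r',\ v\in\{\bot,tt\}\}$. For $w=\delta_1\cdots\delta_n\in\mathrm{Act}^*$, $\alpha\in\mathrm{Act}$, term $p$: $\psi_{w,\alpha,p}=[\delta_1]\cdots[\delta_n](\langle\alpha\rangle\varphi_p\vee\neg\langle\alpha\rangle\varphi_p)$; $\Phi$ is the set of all such formulas; $C_\Phi=\bigcap_{\psi\in\Phi}[\![\psi]\!]^a$. *)

(* Defs.v *)
From Stdlib Require Import List.
From mathcomp Require Import all_boot.
Set Implicit Arguments.
Unset Strict Implicit.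
Unset Printing Implicit Defensive.

Section Order.
Variables (T : Type) (le : T -> T -> Prop).

Definition is_partial_order : Prop :=
  (forall x, le x x) /\
  (forall x y z, le x y -> le y z -> le x z) /\
  (forall x y, le x y -> le y x -> x = y).

Definition directed (S : T -> Prop) : Prop :=
  (exists x, S x) /\
  (forall x y, S x -> S y -> exists z, S z /\ le x z /\ le y z).

Definition is_sup (S : T -> Prop) (s : T) : Prop :=
  (forall x, S x -> le x s) /\
  (forall u, (forall x, S x -> le x u) -> le s u).

Definition is_dcpo : Prop :=
  is_partial_order /\ forall S, directed S -> exists s, is_sup S s.

Definition compact (k : T) : Prop :=
  forall S s, directed S -> is_sup S s -> le k s -> exists x, S x /\ le k x.

Definition algebraic : Prop :=
  is_dcpo /\
  forall x, directed (fun k => compact k /\ le k x) /\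
            is_sup (fun k => compact k /\ le k x) x.

Definition up (A : T -> Prop) : T -> Prop := fun y => exists x, A x /\ le x y.
Definition down (A : T -> Prop) : T -> Prop := fun y => exists x, A x /\ le y x.
Definition upper_set (A : T -> Prop) : Prop := forall x y, A x -> le x y -> A y.

Definition ub (F : seq T) (u : T) : Prop := forall x, List.In x F -> le x u.
Definition mub (F : seq T) (m : T) : Prop :=
  ub F m /\ forall u, ub F u -> le u m -> u = m.

Inductive mub_closure (F : seq T) : T -> Prop :=
| mubc_base x : List.In x F -> mub_closure F x
| mubc_step (G : seq T) m :
    (forall g, List.In g G -> mub_closure F g) -> mub G m -> mub_closure F m.

Definition bifinite : Prop :=
  algebraic /\
  forall F : seq T, (forall x, List.In x F -> compact x) ->
    (forall u, ub F u -> exists m, mub F m /\ le m u) /\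
    (exists l : seq T, forall x, mub_closure F x -> List.In x l) /\
    (forall x, mub_closure F x -> compact x).

Definition scott_open (O : T -> Prop) : Prop :=
  forall x, O x <-> exists k, compact k /\ O k /\ le k x.
Definition scott_closed (C : T -> Prop) : Prop := scott_open (fun x => ~ C x).

(* Lawson topology: generated (as subbasis) by up k \ up l, k, l compact *)
Definition lawson_open (O : T -> Prop) : Prop :=
  forall x, O x -> exists gs : seq (T * T),
    (forall g, List.In g gs -> compact g.1 /\ compact g.2) /\
    (forall g, List.In g gs -> le g.1 x /\ ~ le g.2 x) /\
    (forall y, (forall g, List.In g gs -> le g.1 y /\ ~ le g.2 y) -> O y).
Definition lawson_closed (C : T -> Prop) : Prop := lawson_open (fun x => ~ C x).

Definition scott_closure (A : T -> Prop) : T -> Prop :=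
  fun y => forall C, scott_closed C -> (forall x, A x -> C x) -> C y.

(* Mixed powerdomain (elements as raw pairs + validity predicate)     *)
Definition Mvalid (p : (T -> Prop) * (T -> Prop)) : Prop :=
  scott_closed p.1 /\ lawson_closed p.2 /\ upper_set p.2 /\
  (forall x, p.1 x <-> down (fun y => p.1 y /\ p.2 y) x).

Definition Mle (p q : (T -> Prop) * (T -> Prop)) : Prop :=
  (forall x, p.1 x -> q.1 x) /\ (forall x, q.2 x -> p.2 x).

Definition Meq (p q : (T -> Prop) * (T -> Prop)) : Prop :=
  (forall x, p.1 x <-> q.1 x) /\ (forall x, p.2 x <-> q.2 x).

End Order.

Definition Mmap (T : Type) (le : T -> T -> Prop) (f : T -> T)
    (p : (T -> Prop) * (T -> Prop)) : (T -> Prop) * (T -> Prop) :=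
  (scott_closure le (fun y => exists x, p.1 x /\ y = f x),
   up le (fun y => exists x, p.2 x /\ y = f x)).

(* approximants Phi^n(bottom) of the identity, where
   Phi(f) = fold o (prod_alpha M(f)) o unfold *)
Fixpoint approx (Act : Type) (T : Type) (le : T -> T -> Prop)
    (unf : T -> Act -> (T -> Prop) * (T -> Prop))
    (fld : (Act -> (T -> Prop) * (T -> Prop)) -> T) (n : nat) : T -> T :=
  match n with
  | 0 => fun _ => fld (fun _ => ((fun _ => False), (fun _ => True)))
  | n'.+1 => fun x => fld (fun a => Mmap le (approx le unf fld n') (unf x a))
  end.

(* The initial solution D ~= prod_{alpha in Act} M(D) over bifinite    *)
(* domains, characterized (up to isomorphism) by minimal invariance:   *)
(* id_D is the least fixed point sup_n Phi^n(bot).                     *)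
Record mixed_domain (Act : finType) := MixedDomain {
  car :> Type;
  le : car -> car -> Prop;
  unf : car -> Act -> (car -> Prop) * (car -> Prop);
  fld : (Act -> (car -> Prop) * (car -> Prop)) -> car;
  le_bifinite : bifinite le;
  unf_valid : forall x a, Mvalid le (unf x a);
  fld_unf : forall x, fld (unf x) = x;
  unf_fld : forall t, (forall a, Mvalid le (t a)) ->
              forall a, Meq (unf (fld t) a) (t a);
  le_unf : forall x y, le x y <-> forall a, Mle (unf x a) (unf y a);
  min_inv : forall x, is_sup le (fun y => exists n, y = approx le unf fld n x) x
}.

Section MTS.
Variables (Act : finType) (D : mixed_domain Act).

Definition L (d : D) (a : Act) : D -> Prop := (unf d a).1.
Definition U (d : D) (a : Act) : D -> Prop := (unf d a).2.

Inductive mode := Ma | Mc.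
Definition mneg (m : mode) : mode := match m with Ma => Mc | Mc => Ma end.

Definition R (m : mode) (d : D) (a : Act) (d' : D) : Prop :=
  match m with Ma => L d a d' | Mc => U d a d' end.

Inductive reach_c (d : D) : D -> Prop :=
| reach_refl : reach_c d d
| reach_step d1 a d2 : reach_c d d1 -> R Mc d1 a d2 -> reach_c d d2.
End MTS.

Inductive form (Act : Type) :=
| FTT
| FNeg of form Act
| FDia of Act & form Act
| FAnd of form Act & form Act.
Arguments FTT {Act}.

Definition FBox (Act : Type) (a : Act) (f : form Act) : form Act :=
  FNeg (FDia a (FNeg f)).
Definition FOr (Act : Type) (f g : form Act) : form Act :=
  FNeg (FAnd (FNeg f) (FNeg g)).
Definition big_and (Act : Type) (l : seq (form Act)) : form Act :=
  foldr (@FAnd Act) FTT l.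
Definition big_or (Act : Type) (l : seq (form Act)) : form Act :=
  FNeg (big_and (map (@FNeg Act) l)).

Fixpoint sat (Act : finType) (D : mixed_domain Act) (m : mode) (d : D)
    (f : form Act) : Prop :=
  match f with
  | FTT => True
  | FNeg g => ~ sat (mneg m) d g
  | FDia a g => exists d', R m d a d' /\ sat m d' g
  | FAnd g h => sat m d g /\ sat m d h
  end.

Inductive proc (Act : Type) :=
| PZero
| PBot
| PPreT of Act & proc Act     (* alpha_tt . p *)
| PPreB of Act & proc Act     (* alpha_bot . p *)
| PSum of proc Act & proc Act.

Definition not_basic (Act : Type) (p : proc Act) : Prop :=
  match p with PZero | PBot => False | _ => True end.

Fixpoint wf_proc (Act : Type) (p : proc Act) : Prop :=
  match p with
  | PZero | PBot => True
  | PPreT _ q | PPreB _ q => wf_proc q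
  | PSum q r => wf_proc q /\ wf_proc r /\ not_basic q /\ not_basic r
  end.

(* [aux p] = (phi_p, list of transitions (alpha, v, phi_{p'}) for p -alpha->_v p'),
   v = true meaning tt and v = false meaning bot. *)
Fixpoint aux (Act : finType) (p : proc Act) : form Act * seq (Act * bool * form Act) :=
  match p with
  | PZero => (big_and [seq FNeg (FDia a FTT) | a <- enum Act], [::])
  | PBot => (FTT, [seq (g, false, FTT) | g <- enum Act])
  | PPreT a q =>
      let f := (aux q).1 in
      (FAnd (FDia a f) (FAnd (FBox a f)
         (big_and [seq FNeg (FDia b FTT) | b <- enum Act & b != a])),
       [:: (a, true, f)])
  | PPreB a q =>
      let f := (aux q).1 in
      (FAnd (FBox a f) (big_and [seq FNeg (FDia b FTT) | b <- enum Act & b != a]),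
       [:: (a, false, f)])
  | PSum q r =>
      let tr := (aux q).2 ++ (aux r).2 in
      (FAnd (big_and [seq FDia t.1.1 t.2 | t <- tr & t.1.2])
            (big_and [seq FBox a (big_or [seq t.2 | t <- tr & t.1.1 == a])
                     | a <- enum Act]),
       tr)
  end.

Definition phi (Act : finType) (p : proc Act) : form Act := (aux p).1.

Definition psi (Act : finType) (w : seq Act) (a : Act) (p : proc Act) : form Act :=
  foldr (@FBox Act) (FOr (FDia a (phi p)) (FNeg (FDia a (phi p)))) w.

Definition C_Phi (Act : finType) (D : mixed_domain Act) (d : D) : Prop :=
  forall (w : seq Act) (a : Act) (p : proc Act), wf_proc p -> sat Ma d (psi w a p).

(* Main.v *)
Require Import Defs.
From Stdlib Require Import List Classical FunctionalExtensionality PropExtensionality.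
From mathcomp Require Import all_boot.
Set Implicit Arguments.
Unset Strict Implicit.


Section Gen.
Variables (T : Type) (le : T -> T -> Prop) (Halg : algebraic le).

Lemma g_refl x : le x x.
Proof. by case: Halg => [[[Hr _] _] _]. Qed.
Lemma g_trans x y z : le x y -> le y z -> le x z.
Proof. case: Halg => [[[_ [Ht _]] _] _]; exact: Ht. Qed.

Lemma compact_below x : exists k, compact le k /\ le k x.
Proof. case: Halg => _ H; case: (H x) => [[[k Hk] _] _]; by exists k. Qed.

Lemma sup_compacts x u : (forall k, compact le k -> le k x -> le k u) -> le x u.
Proof. move=> Hu; case: Halg => _ H; case: (H x) => _ [_ Hs]; apply: Hs => k [Hk Hkx]; exact: Hu. Qed.

Lemma scott_closed_down C : scott_closed le C -> forall x y, C y -> le x y -> C x.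
Proof.
move=> HC x y Cy Hxy; apply: NNPP => Hnx.
case: (proj1 (HC x) Hnx) => k [Hk [Hnk Hkx]].
have : ~ C y by apply/(proj2 (HC y)); exists k; split => //; split => //; exact: g_trans Hkx Hxy.
by [].
Qed.

Lemma cl_incl A x : A x -> scott_closure le A x.
Proof. by move=> Ax C _ HC; apply: HC. Qed.

Lemma cl_min A C : scott_closed le C -> (forall x, A x -> C x) ->
  forall x, scott_closure le A x -> C x.
Proof. by move=> HC HAC x Hx; apply: Hx. Qed.

Lemma cl_closed A : scott_closed le (scott_closure le A).
Proof.
move=> x; split.
- move=> Hnx.
  have [C HC] : exists C, ~ (scott_closed le C -> (forall x, A x -> C x) -> C x).
    by apply: not_all_ex_not.
  have [HCc [HAC HnC]] : scott_closed le C /\ (forall x, A x -> C x) /\ ~ C x by tauto.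
  case: (proj1 (HCc x) HnC) => k [Hk [Hnk Hkx]].
  exists k; split => //; split => // Hck; apply: Hnk; exact: Hck.
- move=> [k [Hk [Hnk Hkx]]] Hcx; apply: Hnk => C HCc HAC.
  apply: (scott_closed_down HCc (Hcx C HCc HAC) Hkx).
Qed.

Lemma cl_down A x y : scott_closure le A y -> le x y -> scott_closure le A x.
Proof. move=> Hy Hxy; exact: (scott_closed_down (@cl_closed A) Hy Hxy). Qed.

Lemma down_fin_closed (B : T -> Prop) (l : seq T) :
  (forall y, B y -> List.In y l) -> scott_closed le (down le B).
Proof.
move=> HB x; split.
- move=> Hnx; apply: NNPP => Hno; apply: Hnx.
  have Hall : forall k, compact le k /\ le k x -> exists b, B b /\ List.In b l /\ le k b.
    move=> k Hk; apply: NNPP => Hk'; apply: Hno; exists k; split; first tauto.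
    split; last tauto.
    move=> [b [Bb Hkb]]; apply: Hk'; exists b; split => //; split => //; exact: HB.
  move: Hall; elim: l {HB} => [|b0 r IH] Hall.
  + case: (compact_below x) => k Hk; case: (Hall k Hk) => b [_ [[] _]].
  + case: (classic (forall k, compact le k /\ le k x -> B b0 /\ le k b0)) => Hc.
    * exists b0; split.
        by case: (compact_below x) => k Hk; case: (Hc k Hk).
      apply: sup_compacts => k Hk Hkx; by case: (Hc k (conj Hk Hkx)).
    * have [k0 Hk0] : exists k0, ~ (compact le k0 /\ le k0 x -> B b0 /\ le k0 b0)
        by apply: not_all_ex_not.
      have [Hk0c Hk0n] : (compact le k0 /\ le k0 x) /\ ~ (B b0 /\ le k0 b0) by tauto.
      apply: IH => k Hk.
      case: Halg => _ Hal; case: (Hal x) => [[_ Hdir] _].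
      case: (Hdir k k0 Hk Hk0c) => k' [Hk' [Hkk' Hk0k']].
      case: (Hall k' Hk') => b [Bb [[Eb|Ib] Hk'b]].
      - subst b; exfalso; apply: Hk0n; split => //; exact: g_trans Hk0k' Hk'b.
      - exists b; split => //; split => //; exact: g_trans Hkk' Hk'b.
- move=> [k [Hk [Hnk Hkx]]] [b [Bb Hxb]]; apply: Hnk; exists b; split => //.
  exact: g_trans Hkx Hxb.
Qed.

Lemma up_fin_lawson (B : T -> Prop) (l : seq T) :
  (forall y, B y -> List.In y l) -> lawson_closed le (up le B).
Proof.
move=> HB x Hnx.
case: (compact_below x) => k0 [Hk0 Hk0x].
have [gs [Hgs Hcov]] : exists gs : seq (T * T),
   (forall g, List.In g gs -> (compact le g.1 /\ compact le g.2) /\ (le g.1 x /\ ~ le g.2 x)) /\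
   (forall b, B b -> List.In b l -> exists g, List.In g gs /\ le g.2 b).
  elim: l {HB} => [|b r [gs [H1 H2]]]; first by exists [::]; split => // b _ [].
  case: (classic (B b)) => Bb.
  - have [kb [Hkb [Hkbb Hkbx]]] : exists kb, compact le kb /\ le kb b /\ ~ le kb x.
      apply: NNPP => Hn; apply: Hnx; exists b; split => //.
      apply: sup_compacts => k Hk Hkb; apply: NNPP => Hkx; apply: Hn; by exists k.
    exists ((k0, kb) :: gs); split.
    + move=> g [<-|Hg] //=; exact: H1.
    + move=> b' Bb' [Eb|Ib].
      * subst b'; exists (k0, kb); split => //; by left.
      * case: (H2 b' Bb' Ib) => g [Hg Hgb]; exists g; split => //; by right.
  - exists gs; split => // b' Bb' [Eb|Ib]; first by subst b'.
    exact: H2.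
exists gs; split; first by move=> g Hg; case: (Hgs g Hg).
split; first by move=> g Hg; case: (Hgs g Hg).
move=> y Hy [b [Bb Hby]].
case: (Hcov b Bb (HB b Bb)) => g [Hg Hgb].
case: (Hy g Hg) => _; apply; exact: g_trans Hgb Hby.
Qed.

End Gen.

Fixpoint powerlist (T : Type) (l : seq T) : seq (seq T) :=
  match l with
  | [::] => [:: [::]]
  | b :: r => powerlist r ++ List.map (cons b) (powerlist r)
  end.

Lemma powerlist_sub (T : Type) (l : seq T) (P : T -> Prop) :
  (forall y, P y -> List.In y l) -> exists l', List.In l' (powerlist l) /\ forall y, P y <-> List.In y l'.
Proof.
elim: l P => [|b r IH] P HP.
  exists [::]; split; first by left. move=> y; split => // /HP [].
pose P' := fun y => P y /\ y <> b.
have [l'' [Hin Hl'']] : exists l'', List.In l'' (powerlist r) /\ forall y, P' y <-> List.In y l''.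
  apply: IH => y [Py Hyb]; case: (HP y Py) => // E; by subst.
case: (classic (P b)) => Pb.
- exists (b :: l''); split.
    simpl; apply: in_or_app; right; apply: in_map; exact: Hin.
  move=> y; split.
  + move=> Py; case: (classic (y = b)) => E; first by subst; left.
    right; apply/Hl''; by split.
  + move=> [E|Hy]; first by subst.
    by case: (proj2 (Hl'' y) Hy).
- exists l''; split; first by simpl; apply: in_or_app; left.
  move=> y; split.
  + move=> Py; apply/Hl''; split => // E; by subst.
  + move=> Hy; by case: (proj2 (Hl'' y) Hy).
Qed.

Definition sub_preds (T : Type) (l : seq T) : seq (T -> Prop) :=
  List.map (fun l' y => List.In y l') (powerlist l).

Lemma sub_predsP (T : Type) (l : seq T) (P : T -> Prop) :
  (forall y, P y -> List.In y l) -> List.In P (sub_preds l).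
Proof.
move=> HP; case: (powerlist_sub HP) => l' [Hin Hl'].
have -> : P = (fun y => List.In y l').
  apply: functional_extensionality => y; apply: propositional_extensionality; exact: Hl'.
exact: (in_map (fun l' y => List.In y l')).
Qed.

Lemma In_of_mem (T : eqType) (x : T) (s : seq T) : x \in s -> List.In x s.
Proof. elim: s => //= y s IH; rewrite inE => /orP [/eqP ->|H]; [by left|right; exact: IH]. Qed.

Lemma In_enum (A : finType) (a : A) : List.In a (enum A).
Proof. apply: In_of_mem; by rewrite mem_enum. Qed.

Lemma fun_fin (A : finType) (V : Type) (v0 : V) (lv : seq V) :
  exists lf : seq (A -> V), forall f, (forall a, List.In (f a) lv) -> List.In f lf.
Proof.
have H : forall las : seq A, exists lf : seq (A -> V), forall f, (forall a, List.In (f a) lv) ->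
   exists g, List.In g lf /\ forall a, List.In a las -> f a = g a.
  elim => [|b las [lf Hlf]].
    exists [:: fun _ => v0] => f _; exists (fun _ => v0); split => //; by left.
  exists (List.flat_map (fun g => List.map (fun v => fun a => if a == b then v else g a) lv) lf).
  move=> f Hf; case: (Hlf f Hf) => g [Hg Hfg].
  exists (fun a => if a == b then f b else g a); split.
    apply/in_flat_map; exists g; split => //.
    exact: (in_map (fun v => fun a => if a == b then v else g a)).
  move=> a [E|Ha]; first by subst; rewrite eqxx.
  case: eqP => [->//|_]; exact: Hfg.
case: (H (enum A)) => lf Hlf; exists lf => f Hf.
case: (Hlf f Hf) => g [Hg Hfg].
have -> : f = g by apply: functional_extensionality => a; apply: Hfg; exact: In_enum.
done.
Qed.

Section Dom.
Variables (Act : finType) (D : mixed_domain Act).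

Notation leD := (@le Act D).
Definition apx (n : nat) : D -> D := approx (@le Act D) (@unf Act D) (@fld Act D) n.

Lemma Halg : algebraic leD.
Proof. by case: (le_bifinite D). Qed.

Lemma le_reflD x : leD x x. Proof. exact: (g_refl Halg x). Qed.
Lemma le_transD x y z : leD x y -> leD y z -> leD x z. Proof. exact: (g_trans Halg). Qed.

Lemma le_unfP (x y : D) : leD x y <-> forall a, (forall z, L x a z -> L y a z) /\ (forall z, U y a z -> U x a z).
Proof. exact: le_unf. Qed.

Lemma L_closed (x : D) a : scott_closed leD (L x a).
Proof. by case: (unf_valid x a). Qed.
Lemma L_down (x : D) a v w : L x a w -> leD v w -> L x a v.
Proof. move=> Hw Hvw; exact: (scott_closed_down Halg (L_closed x a) Hw Hvw). Qed.
Lemma L_LU (x : D) a w : L x a w -> exists w', L x a w' /\ U x a w' /\ leD w w'.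
Proof.
case: (unf_valid x a) => _ [_ [_ H]] Hw.
case: (proj1 (H w) Hw) => w' [[H1 H2] H3]; by exists w'.
Qed.
Lemma U_up (x : D) a v w : U x a v -> leD v w -> U x a w.
Proof. case: (unf_valid x a) => _ [_ [H _]]; exact: H. Qed.

Definition botp : (D -> Prop) * (D -> Prop) := ((fun _ => False), (fun _ => True)).

Lemma botp_valid : Mvalid leD botp.
Proof.
split.
  move=> x /=; split => [_|]; last by move=> _ [].
  case: (compact_below Halg x) => k [Hk Hkx]; by exists k; split => //; split => //; move=> [].
split; first by move=> x /= H; exfalso; apply: H.
split; first by [].
move=> x /=; split; [by [] | by move=> [y [[[] _] _]]].
Qed.

Lemma pi0_bot x y : leD (apx 0 x) y.
Proof.
apply/le_unfP => a.
have [H1 H2] := unf_fld (fun _ => botp_valid) a.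
split => z; rewrite /L /U /apx /=.
- by move/H1.
- move=> _; by apply/H2.
Qed.

Definition Bn n := (forall x y, leD x y -> leD (apx n x) (apx n y)) /\
                   exists l, forall x, List.In (apx n x) l.

Definition img n (P : D -> Prop) : D -> Prop := fun y => exists w, P w /\ y = apx n w.

Lemma Mmap_valid n : Bn n -> forall x a, Mvalid leD (Mmap leD (apx n) (unf x a)).
Proof.
move=> [Hmon [l Hl]] x a.
have HL : forall y, img n (L x a) y -> List.In y l by move=> y [w [_ ->]].
have HU : forall y, img n (U x a) y -> List.In y l by move=> y [w [_ ->]].
rewrite /Mvalid /Mmap /=.
split; first exact (cl_closed Halg _).
split; first exact: (up_fin_lawson Halg HU).
split; first by move=> y z [w [Hw Hwy]] Hyz; exists w; split => //; exact: le_transD Hwy Hyz.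
move=> z; split.
- move=> Hz.
  have : down leD (img n (L x a)) z.
    apply: (cl_min (down_fin_closed Halg HL)) Hz => y Hy; exists y; split => //; exact: le_reflD.
  move=> [y [[w [Hw ->]] Hzy]].
  case: (L_LU Hw) => w' [Hw'L [Hw'U Hww']].
  exists (apx n w'); split; last exact: le_transD Hzy (Hmon _ _ Hww').
  split; first by apply: cl_incl; exists w'.
  exists (apx n w'); split; [by exists w' | exact: le_reflD].
- move=> [y [[Hy _] Hzy]]; exact: (cl_down Halg Hy Hzy).
Qed.

Lemma piS_unf n : Bn n -> forall x a,
  (forall z, L (apx n.+1 x) a z <-> scott_closure leD (img n (L x a)) z) /\
  (forall z, U (apx n.+1 x) a z <-> up leD (img n (U x a)) z).
Proof.
move=> Hb x a.
have := unf_fld (fun a => Mmap_valid Hb x a) a.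
by rewrite /L /U.
Qed.

Lemma Bn_all n : Bn n.
Proof.
elim: n => [|n IH].
  split; first by move=> x y _; exact: le_reflD.
  by exists [:: apx 0 (fld (unf (fld (fun _ => botp))))] => x; left.
split.
- move=> x y Hxy; apply/le_unfP => a.
  have [Hx1 Hx2] := piS_unf IH x a; have [Hy1 Hy2] := piS_unf IH y a.
  have [H1 H2] := proj1 (le_unfP x y) Hxy a.
  split => z.
  + move/Hx1 => Hz; apply/Hy1.
    apply: (cl_min (@cl_closed _ _ Halg _)) Hz => v [w [Hw ->]].
    apply: cl_incl; exists w; split => //; exact: H1.
  + move/Hy2 => [v [[w [Hw ->]] Hwz]]; apply/Hx2; exists (apx n w); split => //.
    exists w; split => //; exact: H2.
- case: IH => Hmon [l Hl].
  pose G (k : Act -> (D -> Prop) * (D -> Prop)) : D :=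
    fld (fun a => (scott_closure leD (k a).1, up leD (k a).2)).
  have [lf Hlf] := fun_fin Act (fun _ => False, fun _ => False)
                     (List.list_prod (sub_preds l) (sub_preds l)).
  exists (List.map G lf) => x.
  have -> : apx n.+1 x = G (fun a => (img n (L x a), img n (U x a))) by [].
  apply: in_map; apply: Hlf => a /=; apply: in_prod; apply: sub_predsP => y [w [_ ->]] //.
Qed.

Lemma pi_mono n x y : leD x y -> leD (apx n x) (apx n y).
Proof. by case: (Bn_all n) => H _; apply: H. Qed.

Lemma pi_fin n : exists l, forall x, List.In (apx n x) l.
Proof. by case: (Bn_all n). Qed.

Lemma piS_L n x a z : L (apx n.+1 x) a z <-> scott_closure leD (img n (L x a)) z.
Proof. exact: (proj1 (piS_unf (Bn_all n) x a)). Qed.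
Lemma piS_U n x a z : U (apx n.+1 x) a z <-> up leD (img n (U x a)) z.
Proof. exact: (proj2 (piS_unf (Bn_all n) x a)). Qed.

Lemma pi_chain n x : leD (apx n x) (apx n.+1 x).
Proof.
elim: n x => [|n IH] x; first exact: pi0_bot.
apply/le_unfP => a; split => z.
- move/piS_L => Hz; apply/piS_L.
  apply: (cl_min (@cl_closed _ _ Halg _)) Hz => v [w [Hw ->]].
  apply: (cl_down Halg _ (IH w)); apply: cl_incl; by exists w.
- move/piS_U => [v [[w [Hw ->]] Hwz]]; apply/piS_U; exists (apx n w); split.
    by exists w.
  exact: le_transD (IH w) Hwz.
Qed.

Lemma pi_chain_le m n x : m <= n -> leD (apx m x) (apx n x).
Proof.
move=> Hmn; rewrite -(subnKC Hmn); elim: (n - m) => [|k IH]; first by rewrite addn0; exact: le_reflD.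
rewrite addnS; exact: le_transD IH (pi_chain _ _).
Qed.

Lemma compact_approx k x : compact leD k -> leD k x -> exists n, leD k (apx n x).
Proof.
move=> Hk Hkx.
have Hd : directed leD (fun y => exists n, y = apx n x).
  split; first by exists (apx 0 x), 0.
  move=> y z [i ->] [j ->]; exists (apx (maxn i j) x); split; first by exists (maxn i j).
  split; apply: pi_chain_le; by rewrite ?leq_maxl ?leq_maxr.
case: (Hk _ _ Hd (@min_inv Act D x) Hkx) => y [[n ->] H]; by exists n.
Qed.

End Dom.

Lemma In_smap (A B : Type) (f : A -> B) (l : seq A) y :
  List.In y [seq f x | x <- l] <-> exists x, f x = y /\ List.In x l.
Proof.
elim: l => [|x l IH] /=; first by split => // [[x [_ []]]].
split.
- move=> [E|H]; first by exists x; split => //; left.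
  case: (proj1 IH H) => x' [E H']; exists x'; split => //; by right.
- move=> [x' [E [E'|H]]]; first by subst; left.
  right; apply/IH; by exists x'.
Qed.

Lemma In_sfilter (A : Type) (p : pred A) (l : seq A) x :
  List.In x [seq y <- l | p y] <-> List.In x l /\ p x.
Proof.
elim: l => [|y l IH] /=; first by split => // [[]].
case Hp: (p y) => /=.
- split.
  + move=> [E|H]; first by subst; split => //; left.
    case: (proj1 IH H) => H1 H2; split => //; by right.
  + move=> [[E|H] Hx]; first by left.
    right; apply/IH; by split.
- split.
  + move=> H; case: (proj1 IH H) => H1 H2; split => //; by right.
  + move=> [[E|H] Hx]; first by subst; rewrite Hp in Hx.
    apply/IH; by split.
Qed.

Section Sem.
Variables (Act : finType) (D : mixed_domain Act).

Lemma mnegK m : mneg (mneg m) = m. Proof. by case: m. Qed.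

Lemma sat_big_and m (z : D) l : sat m z (big_and l) <-> forall f, List.In f l -> sat m z f.
Proof.
elim: l => [|f l IH] /=; first by split.
split.
- move=> [H1 H2] g [E|Hg]; first by subst. exact: (proj1 IH H2).
- move=> H; split; first by apply: H; left.
  apply/IH => g Hg; apply: H; by right.
Qed.

Lemma sat_big_or m (z : D) l : sat m z (big_or l) <-> exists f, List.In f l /\ sat m z f.
Proof.
rewrite /big_or /=; split.
- move=> H; apply: NNPP => Hn; apply: H; apply/sat_big_and => g /In_smap [f [<- Hf]] /=.
  rewrite mnegK => Hs; apply: Hn; by exists f.
- move=> [f [Hf Hs]] /sat_big_and H.
  have := H (FNeg f); rewrite /= mnegK; apply => //.
  apply/In_smap; by exists f.
Qed.

Lemma sat_box m (z : D) a f : sat m z (FBox a f) <-> forall v, R (mneg m) z a v -> sat m v f.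
Proof.
rewrite /FBox /=; split.
- move=> H v Hv; apply: NNPP => Hn; apply: H; exists v; split => //; by rewrite mnegK.
- move=> H [v [Hv Hn]]; apply: Hn; rewrite mnegK; exact: H.
Qed.

Lemma sat_and m (z : D) f g : sat m z (FAnd f g) <-> sat m z f /\ sat m z g.
Proof. by []. Qed.

Fixpoint mk (tr : seq (Act * proc Act)) : proc Act :=
  match tr with
  | [::] => PZero Act
  | p :: r => match r with
              | [::] => PPreT p.1 p.2
              | _ :: _ => PSum (PPreT p.1 p.2) (mk r)
              end
  end.

Definition trans_of (tr : seq (Act * proc Act)) : seq (Act * bool * form Act) :=
  [seq (p.1, true, phi p.2) | p <- tr].

Lemma aux2_mk p r : (aux (mk (p :: r))).2 = trans_of (p :: r).
Proof.
elim: r p => [|q r IH] p //=.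
by rewrite IH.
Qed.

Lemma wf_mk tr : (forall p, List.In p tr -> wf_proc p.2) -> wf_proc (mk tr).
Proof.
elim: tr => [|p r IH] H //=.
case: r IH H => [|q r] IH H /=; first by apply: H; left.
split; first by apply: H; left.
split; first by apply: IH => p' Hp'; apply: H; right.
split => //.
by case: r {IH H}.
Qed.

Definition SEM m (z : D) tr :=
  (forall p, List.In p tr -> exists v, R m z p.1 v /\ sat m v (phi p.2)) /\
  (forall a v, R (mneg m) z a v -> exists p, List.In p tr /\ p.1 = a /\ sat m v (phi p.2)).

Lemma sat_mk m (z : D) tr : sat m z (phi (mk tr)) <-> SEM m z tr.
Proof.
rewrite /SEM.
case: tr => [|p [|q r]].
- rewrite /phi /=; split.
  + move/sat_big_and => H; split => // a v Hv; exfalso.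
    have := H (FNeg (FDia a FTT)); apply.
      apply/In_smap; exists a; split => //; exact: In_enum.
    by exists v.
  + move=> [_ H]; apply/sat_big_and => f /In_smap [a [<- _]] /= [v [Hv _]].
    by case: (H a v Hv) => p [[]].
- rewrite /phi /=; split.
  + move=> [[v [Hv Hs]] [Hb Hr]]; split.
      move=> p' [E|[]]; subst p'; by exists v.
    move=> a v' Hv'.
    case: (classic (a = p.1)) => E.
      subst a; exists p; split; first by left.
      split => //; exact: (proj1 (sat_box _ _ _ _) Hb v' Hv').
    exfalso; move/sat_big_and: Hr => Hr.
    have := Hr (FNeg (FDia a FTT)); apply.
      apply/In_smap; exists a; split => //; apply/In_sfilter; split; first exact: In_enum.
      by apply/eqP.
    by exists v'.
  + move=> [H1 H2]; split; first by apply: H1; left.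
    split.
      apply/sat_box => v Hv; case: (H2 _ _ Hv) => p' [[E|[]] [_ Hs]]; by subst.
    apply/sat_big_and => f /In_smap [a [<- /In_sfilter [_ Hab]]] /= [v [Hv _]].
    case: (H2 _ _ Hv) => p' [[E|[]] [Ea _]]; subst p'.
    by rewrite Ea eqxx in Hab.
- have E : phi (mk [:: p, q & r]) =
    FAnd (big_and [seq FDia t.1.1 t.2 | t <- trans_of [:: p, q & r] & t.1.2])
         (big_and [seq FBox a (big_or [seq t.2 | t <- trans_of [:: p, q & r] & t.1.1 == a])
                  | a <- enum Act]).
    rewrite /phi -aux2_mk /=.
    by [].
  rewrite E sat_and sat_big_and sat_big_and; split.
  + move=> [H1 H2]; split.
    * move=> p' Hp'.
      have := H1 (FDia p'.1 (phi p'.2)); apply.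
      apply/In_smap; exists (p'.1, true, phi p'.2); split => //.
      apply/In_sfilter; split => //; apply/In_smap; by exists p'.
    * move=> a v Hv.
      have Hb : sat m z (FBox a (big_or [seq t.2 | t <- trans_of [:: p, q & r] & t.1.1 == a])).
        apply: H2; apply/In_smap; exists a; split => //; exact: In_enum.
      move/sat_box: Hb => /(_ v Hv) /sat_big_or [f [/In_smap [t [<- /In_sfilter [Ht /eqP Ha]]] Hs]].
      move: Ht => /In_smap [p' [Et Hp']]; subst t.
      exists p'; split => //.
  + move=> [H1 H2]; split.
    * move=> f /In_smap [t [<- /In_sfilter [/In_smap [p' [<- Hp']] _]]] /=.
      exact: H1.
    * move=> f /In_smap [a [<- _]]; apply/sat_box => v Hv.
      case: (H2 a v Hv) => p' [Hp' [Ea Hs]].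
      apply/sat_big_or; exists (phi p'.2); split => //.
      apply/In_smap; exists (p'.1, true, phi p'.2); split => //.
      apply/In_sfilter; split; last by rewrite /= Ea eqxx.
      apply/In_smap; by exists p'.
Qed.

End Sem.

Section Main.
Variables (Act : finType) (D : mixed_domain Act).
Notation leD := (@le Act D).

Definition Props n (w : D) (s : proc Act) :=
  (forall z : D, leD (apx n z) (apx n w) -> sat Mc z (phi s)) /\
  (forall y : D, sat Ma y (phi s) -> leD (apx n w) y).

Lemma TL n : forall x : D, exists t, wf_proc t /\ Props n x t.
Proof.
elim: n => [|n IH] x.
  exists (PBot Act); split => //; split => // y _; exact: pi0_bot.
case: (pi_fin D n) => l Hl.
have [tr [P1 P2]] : exists tr : seq (Act * proc Act),
   (forall p, List.In p tr -> wf_proc p.2 /\ exists w, L x p.1 w /\ U x p.1 w /\ Props n w p.2) /\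
   (forall a w, L x a w -> U x a w -> exists s, List.In (a, s) tr /\ Props n w s).
  suff H : forall ps : seq (Act * D), exists tr : seq (Act * proc Act),
     (forall p, List.In p tr -> wf_proc p.2 /\ exists w, L x p.1 w /\ U x p.1 w /\ Props n w p.2) /\
     (forall a g, List.In (a, g) ps -> forall w, L x a w -> U x a w -> apx n w = g ->
        exists s, List.In (a, s) tr /\ Props n w s).
    case: (H (List.list_prod (enum Act) l)) => tr [H1 H2]; exists tr; split => //.
    move=> a w HL HU; apply: (H2 a (apx n w)) => //.
    apply: in_prod; [exact: In_enum | exact: Hl].
  elim => [|[a g] ps [tr [H1 H2]]]; first by exists [::]; split => // a g [].
  case: (classic (exists w, L x a w /\ U x a w /\ apx n w = g)) => Hex.
  - case: Hex => w0 [HL0 [HU0 Hg0]].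
    case: (IH w0) => s [Hws Hs].
    exists ((a, s) :: tr); split.
    + move=> p [<-|Hp]; last exact: H1.
      split => //; by exists w0.
    + move=> a' g' [E|Hin] w HL HU Hg.
      * case: E => <- Eg.
        exists s; split; first by left.
        have E2 : apx n w = apx n w0 by rewrite Hg Hg0 Eg.
        by rewrite /Props E2.
      * case: (H2 a' g' Hin w HL HU Hg) => s' [Hs' Hp]; exists s'; split => //; by right.
  - exists tr; split => // a' g' [E|Hin] w HL HU Hg.
    * case: E => Ea Eg; subst a' g'; exfalso; apply: Hex; by exists w.
    * exact: H2 Hin w HL HU Hg.
exists (mk tr); split.
  apply: wf_mk => p Hp; by case: (P1 p Hp).
split.
- move=> z Hz; apply/sat_mk; split.
  + move=> [a s] Hp; case: (P1 _ Hp) => _ [w [HL [HU [Hc _]]]] /=.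
    have [_ H2] := proj1 (le_unfP _ _) Hz a.
    have : U (apx n.+1 x) a (apx n w) by apply/piS_U; exists (apx n w); split; [by exists w | exact: le_reflD].
    move/H2/piS_U => [y [[v [Hv ->]] Hvw]].
    exists v; split => //; exact: Hc.
  + move=> a v Hv /=.
    have [H1 _] := proj1 (le_unfP _ _) Hz a.
    have : L (apx n.+1 z) a (apx n v) by apply/piS_L; apply: cl_incl; by exists v.
    move/H1/piS_L.
    have HB : forall y, img n (L x a) y -> List.In y l by move=> y [w [_ ->]].
    move/(cl_min (down_fin_closed (Halg D) HB)).
    case.
      move=> y Hy; exists y; split => //; exact: le_reflD.
    move=> y [[w [Hw ->]] Hvw].
    case: (L_LU Hw) => w' [HL' [HU' Hww']].
    case: (P2 a w' HL' HU') => s [Hs [Hc _]].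
    exists (a, s); split => //; split => //=.
    apply: Hc; apply: le_transD Hvw (pi_mono n Hww').
- move=> y /sat_mk [S1 S2]; apply/le_unfP => a; split => z.
  + move/piS_L; apply: cl_min; first exact: L_closed.
    move=> u [w [Hw ->]].
    case: (L_LU Hw) => w' [HL' [HU' Hww']].
    case: (P2 a w' HL' HU') => s [Hs [_ Ha]].
    case: (S1 _ Hs) => v [Hv Hsv] /=.
    apply: (L_down Hv); apply: le_transD (pi_mono n Hww') _; exact: Ha.
  + move=> Hz; case: (S2 a z Hz) => [[a' s]] [Hp [/= Ea Hs]]; subst a'.
    case: (P1 _ Hp) => _ [w [HL [HU [_ Ha]]]].
    apply/piS_U; exists (apx n w); split; [by exists w | exact: Ha].
Qed.

End Main.

Lemma C_step (Act : finType) (D : mixed_domain Act) (d1 : D) a d2 :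
  C_Phi d1 -> U d1 a d2 -> C_Phi d2.
Proof.
move=> H Hd2 w b p Hp.
have H' : sat Ma d1 (FBox a (psi w b p)) := H (a :: w) b p Hp.
exact: (proj1 (sat_box _ _ _ _) H' d2 Hd2).
Qed.

Lemma C_reach (Act : finType) (D : mixed_domain Act) (d d' : D) :
  reach_c d d' -> C_Phi d -> C_Phi d'.
Proof.
elim => [|d1 a d2 _ IH H2] // Hd; exact: C_step (IH Hd) H2.
Qed.

Lemma U_in_L (Act : finType) (D : mixed_domain Act) (d : D) a x :
  C_Phi d -> U d a x -> L d a x.
Proof.
move=> Hd Hx; apply: NNPP => Hn.
case: (proj1 (L_closed d a x) Hn) => k [Hk [Hnk Hkx]].
case: (compact_approx Hk Hkx) => n Hkn.
case: (TL n x) => t [Hwf [Hc Ha]].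
have H := Hd [::] a t Hwf.
have Hm : sat Mc d (FDia a (phi t)).
  exists x; split => //; apply: Hc; exact: le_reflD.
have Ha' : sat Ma d (FDia a (phi t)).
  have H' : ~ (~ sat Ma d (FDia a (phi t)) /\ ~ ~ sat Mc d (FDia a (phi t))) := H.
  apply: NNPP => Hna; apply: H'; split => //; by move/(_ Hm).
case: Ha' => y [Hy Hsy].
apply: Hnk; apply: (L_down Hy); apply: le_transD Hkn (Ha y Hsy).
Qed.

Theorem lemma3p19 (Act : finType) (D : mixed_domain Act) (d : D) :
  C_Phi d ->
  (forall d' : D, reach_c d d' -> C_Phi d') /\
  (forall a : Act, forall x : D, U d a x <-> up (@le _ D) (fun y => L d a y /\ U d a y) x) /\
  (forall f : form Act, sat Mc d f -> sat Ma d f).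
Proof.
move=> Hd; split; first by move=> d' Hr; exact: C_reach Hr Hd.
split.
  move=> a x; split.
  - move=> Hx; exists x; split; last exact: le_reflD.
    split => //; exact: U_in_L Hd Hx.
  - move=> [y [[_ Hy] Hyx]]; exact: U_up Hy Hyx.
move=> f; elim: f d Hd => [|g IH|a g IH|g IHg h IHh] d Hd //=.
- move=> Hn Hc; apply: Hn; exact: IH.
- move=> [v [Hv Hs]]; exists v; split; first exact: U_in_L Hd Hv.
  apply: IH => //; exact: C_step Hd Hv.
- move=> [H1 H2]; split; [exact: IHg | exact: IHh].
Qed.
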